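(* Let $\lambda\ge 0$ be an integer. For one-sided matching with unrestricted (arbitrary nonnegative) valuations, the algorithm $\lambda$-TSF makes at most $1+\lambda+\lambda\log n$ value queries per agent and has distortion at most $2n^{1/(\lambda+1)}$.
   Context: One-sided matching: there is a set $N$ of $n$ agents and a set $A$ of $n$ items. Each agent $i$ has a valuation function $v_i:A\to\mathbb{R}_{\ge 0}$. A profile $\mathbf v$ induces an ordinal profile $\succ_{\mathbf v}$ of strict rankings consistent with the values (if $a\succ_i b$ then $v_i(a)\ge v_i(b)$). A matching $Y=(y_i)$ is a bijection $N\to A$, and $\mathrm{SW}(Y\mid\mathbf v)=\sum_i v_i(y_i)$. An algorithm receives $\succ_{\mathbf v}$ and may make value queries $(i,j)\mapsto v_i(j)$. Its distortion is $\sup_{\mathbf v}\max_Z\mathrm{SW}(Z\mid\mathbf v)/\mathrm{SW}(\text{output}\mid\mathbf v)$. Algorithm $\lambda$-TSF: let $\alpha_\ell=n^{-\ell/(\lambda+1)}$ for $\ell=0,\dots,\lambda$. For each agent $i$: - query $i$'s top-ranked item $j_i^*$ and let $v_i^*=v_i(j_i^* )$; - set $Q_{i,0}=\{j_i^*\}$ and $\tilde v_i(j_i^* )=v_i^*$; - for each $\ell=1,\dots,\lambda$, let $Q_{i,\ell}$ be the set of items $j\ne j_i^*$ with $v_i(j)\in[\alpha_\ell v_i^*,\alpha_{\ell-1}v_i^* )$ (for $\ell=1$ the upper endpoint $v_i^*$ is included). Since values are nonincreasing along $\succ_i$, each $Q_{i,\ell}$ is a contiguous segment of $i$'s ranking,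 and it is found by binary search over the ranking using value queries. Set $\tilde v_i(j)=\alpha_\ell v_i^*$ for $j\in Q_{i,\ell}$; - set $\tilde v_i(j)=0$ for items $j$ in no $Q_{i,\ell}$. The algorithm outputs a matching maximizing $\sum_i\tilde v_i(y_i)$. *)

(* Defs.v *)
From HB Require Import structures.
From mathcomp Require Import all_boot all_order all_algebra fingroup perm.
From mathcomp Require Import reals exp.
Set Implicit Arguments. Unset Strict Implicit. Unset Printing Implicit Defensive.
Import Order.TTheory GRing.Theory Num.Theory.
Local Open Scope ring_scope.

(* Number of agents = number of items = n.+1 (i.e. any n >= 1).
   Agents and items are both 'I_n.+1.  A matching is a permutation
   Y : {perm 'I_n.+1}, agent i gets item Y i.
   An ordinal profile is  rank : agent -> {perm 'I_n.+1}, where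
   rank i k is the item in position k of agent i's ranking (position 0 = top). *)

Section TSF.
Variable R : realType.
Variable n : nat.
Local Notation N := n.+1.
Local Notation item := 'I_N.
Local Notation agent := 'I_N.

Definition SW (v : agent -> item -> R) (Y : {perm agent}) : R :=
  \sum_(i : agent) v i (Y i).

Definition consistent (vi : item -> R) (rk : {perm item}) : Prop :=
  forall k k' : 'I_N, (k <= k')%N -> vi (rk k') <= vi (rk k).

Definition alpha (lam l : nat) : R :=
  powR (N%:R) (- (l%:R / (lam.+1)%:R)).

Definition inQ (lam : nat) (vi : item -> R) (jstar : item) (l : nat) (j : item)
  : bool :=
  let vs := vi jstar in
  [&& j != jstar, alpha lam l * vs <= vi j &
      (vi j < alpha lam l.-1 * vs) || ((l == 1)%N && (vi j <= vs))].

(* tilde v_i(j): vstar on jstar, alpha_l vstar on Q_{i,l} (first such l; the Q_{i,l}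
   are pairwise disjoint anyway), 0 elsewhere. *)
Definition tilde_spec (lam : nat) (vi : item -> R) (rk : {perm item})
  (j : item) : R :=
  let jstar := rk ord0 in
  let vs := vi jstar in
  if j == jstar then vs
  else foldr (fun l acc => if inQ lam vi jstar l j then alpha lam l * vs else acc)
             0 (iota 1 lam).

(* A program may ask for the value of an item (QAsk j k: query v_i(j), continue
   with k applied to the answer) or return a result. *)
Inductive qprog (A : Type) : Type :=
| QRet : A -> qprog A
| QAsk : item -> (R -> qprog A) -> qprog A.

Fixpoint qbind (A B : Type) (p : qprog A) (f : A -> qprog B) : qprog B :=
  match p with
  | QRet a => f a
  | QAsk j k => QAsk j (fun x => qbind (k x) f)
  end.

Fixpoint qrun (A : Type) (vi : item -> R) (p : qprog A) : A * nat :=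
  match p with
  | QRet a => (a, 0%N)
  | QAsk j k => let r := qrun vi (k (vi j)) in (r.1, r.2.+1)
  end.

Fixpoint bsearch (rk : {perm item}) (thr : R) (fuel lo hi : nat) : qprog nat :=
  match fuel with
  | 0%N => QRet lo
  | fuel'.+1 =>
      if (lo < hi)%N then
        let mid := ((lo + hi)./2)%N in
        QAsk (rk (inord mid))
          (fun x => if x < thr then bsearch rk thr fuel' lo mid
                    else bsearch rk thr fuel' mid.+1 hi)
      else QRet lo
  end.

(* Boundaries b_1, ..., b_lam (b_0 = 1): Q_{i,l} = positions [b_{l-1}, b_l). *)
Fixpoint levels (rk : {perm item}) (lam : nat) (vs : R) (l prev : nat)
  (cnt : nat) : qprog (seq nat) :=
  match cnt with
  | 0%N => QRet [::]
  | cnt'.+1 =>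
      qbind (bsearch rk (alpha lam l * vs) N prev N)
        (fun b => qbind (levels rk lam vs l.+1 b cnt')
                   (fun bs => QRet (b :: bs)))
  end.

Definition tsf_agent (rk : {perm item}) (lam : nat) : qprog (R * seq nat) :=
  QAsk (rk ord0) (fun vs =>
    qbind (levels rk lam vs 1 1 lam) (fun bs => QRet (vs, bs))).

Definition tilde_of_output (lam : nat) (rk : {perm item}) (out : R * seq nat)
  (j : item) : R :=
  let vs := out.1 in
  let bs := 1%N :: out.2 in
  let p := nat_of_ord ((rk^-1)%g j) in
  if p == 0%N then vs
  else foldr (fun l acc =>
                if (nth 0%N bs l.-1 <= p < nth 0%N bs l)%N
                then alpha lam l * vs else acc)
             0 (iota 1 lam).

End TSF.

Arguments SW {R n}.
Arguments consistent {R n}.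
Arguments alpha {R}.
Arguments inQ {R n}.
Arguments tilde_spec {R n}.
Arguments qrun {R n A}.
Arguments QRet {R n A}.
Arguments QAsk {R n A}.
Arguments qbind {R n A B}.
Arguments bsearch {R n}.
Arguments levels {R n}.
Arguments tsf_agent {R n}.
Arguments tilde_of_output {R n}.

(* Main.v *)
Require Import Defs.
From HB Require Import structures.
From mathcomp Require Import all_boot all_order all_algebra fingroup perm.
From mathcomp Require Import reals exp.
From mathcomp Require Import zify ring lra.
Import Order.TTheory GRing.Theory Num.Theory.
Local Open Scope ring_scope.

Lemma qrun_bind (R : realType) n A B (vi : 'I_n.+1 -> R) (p : qprog R n A)
  (f : A -> qprog R n B) :
  qrun vi (qbind p f) = ((qrun vi (f (qrun vi p).1)).1,
                         ((qrun vi p).2 + (qrun vi (f (qrun vi p).1)).2)%N).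
Proof.
elim: p => [a|j k IH] /=; first by case: (qrun _ _).
by rewrite IH.
Qed.

Lemma bsearch_cnt (R : realType) n (vi : 'I_n.+1 -> R) (rk : {perm 'I_n.+1}) thr fuel lo hi k :
  (hi - lo < 2 ^ k)%N -> ((qrun vi (bsearch rk thr fuel lo hi)).2 <= k)%N.
Proof.
elim: fuel lo hi k => [|fuel IH] lo hi k hk /=; first by [].
case: ifP => hlo /=; last by [].
case: k hk => [|k] hk; first by rewrite expn0 in hk; lia.
rewrite ltnS; case: ifP => _; apply: IH; rewrite expnS -divn2 in hk *;
  set K := (2 ^ k)%N in hk *; lia.
Qed.

Lemma bsearch_spec (R : realType) n (vi : 'I_n.+1 -> R) (rk : {perm 'I_n.+1}) thr fuel lo hi :
  let P := fun p : nat => vi (rk (inord p)) < thr in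
  (hi - lo <= fuel)%N -> (lo <= hi)%N ->
  (forall p q, (lo <= p)%N -> (p <= q)%N -> (q < hi)%N -> P p -> P q) ->
  let r := (qrun vi (bsearch rk thr fuel lo hi)).1 in
  [/\ (lo <= r <= hi)%N,
  (forall p, (lo <= p < r)%N -> ~~ P p) & (forall p, (r <= p < hi)%N -> P p)].
Proof.
move=> P; elim: fuel lo hi => [|fuel IH] lo hi hf hlh hm /=.
  split; first lia; move=> p hp; first lia.
  exfalso; lia.
case: ifP => hlo /=; last first.
  split; first lia; move=> p hp; first lia.
  exfalso; lia.
set mid := ((lo + hi)./2)%N.
have hmid : (lo <= mid < hi)%N by rewrite /mid -divn2; lia.
case: ifP => hP.
- have [] := IH lo mid _ _ _.
  + rewrite /mid -divn2; lia.
  + lia.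
  + move=> p q h1 h2 h3; apply: hm => //; lia.
  move=> [h1 h3 h4]; split; first lia; move=> // p hp.
  case: (ltnP p mid) => hpm; first by apply: h4; lia.
  apply: (hm mid) => //; lia.
- have [] := IH mid.+1 hi _ _ _.
  + rewrite /mid -divn2; lia.
  + lia.
  + move=> p q h1 h2 h3; apply: hm => //; lia.
  move=> [h1 h3 h4]; split; first lia; move=> // p hp.
  case: (ltnP p mid.+1) => hpm; last by apply: h3; lia.
  apply/negP => Pp; move: hP; rewrite -/(P mid) (hm p mid) //; lia.
Qed.

Lemma levels_cnt (R : realType) n (vi : 'I_n.+1 -> R) (rk : {perm 'I_n.+1}) lam vs k :
  (n.+1 < 2 ^ k)%N -> forall cnt l prev,
  ((qrun vi (levels rk lam vs l prev cnt)).2 <= cnt * k)%N.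
Proof.
move=> hk; elim=> [|cnt IH] l prev /=; first by [].
have hb := @bsearch_cnt R n vi rk (alpha n lam l * vs) n.+1 prev n.+1 k ltac:(lia).
rewrite !qrun_bind addn0 mulSn; apply: leq_add; first exact: hb.
rewrite /= ?addn0; apply: IH.
Qed.

Lemma levels_spec (R : realType) n (vi : 'I_n.+1 -> R) (rk : {perm 'I_n.+1}) lam vs :
  let f := fun p : nat => vi (rk (inord p)) in
  (forall p q, (p <= q < n.+1)%N -> f q <= f p) ->
  (forall m, alpha n lam m.+1 * vs <= alpha n lam m * vs) ->
  forall cnt l prev, (1 <= prev <= n.+1)%N ->
  (forall p, (1 <= p < prev)%N -> alpha n lam l * vs <= f p) ->
  let bs := (qrun vi (levels rk lam vs l prev cnt)).1 in
  size bs = cnt /\ forall t, (t < cnt)%N ->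
    (forall p, (1 <= p < n.+1)%N ->
       (nth 0%N bs t <= p)%N = (f p < alpha n lam (l + t) * vs)).
Proof.
move=> f hf ha; elim=> [|cnt IH] l prev hp hpre /=; first by [].
rewrite !qrun_bind /=.
have [] := @bsearch_spec R n vi rk (alpha n lam l * vs) n.+1 prev n.+1 _ _ _.
- lia.
- lia.
- move=> p q h1 h2 h3; apply: le_lt_trans; apply: hf; lia.
set b := (qrun vi _).1 => hb h1 h2.
have [] := IH l.+1 b _ _.
- lia.
- move=> p hpb; apply: le_trans (ha l) _.
  case: (ltnP p prev) => hpp; first by apply: hpre; lia.
  by rewrite leNgt; apply: h1; lia.
move=> hs ht; split; first by rewrite hs.
case=> [|t] htc p hpn /=.
- rewrite addn0; apply/idP/idP => H.
    by apply: h2; lia.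
  case: (ltnP p prev) => hpp; last by case: (ltnP p b) => // /(conj hpp)/andP/h1; rewrite H.
  by move: (hpre p (ltac:(lia))); rewrite leNgt H.
- by rewrite ht // addSnnS.
Qed.
Lemma log_bound (R : realType) n :
  ((trunc_log 2 n.+1)%:R : R) <= ln (n.+1)%:R / ln 2.
Proof.
have l2 : (0 : R) < ln 2 by apply: ln_gt0; lra.
rewrite ler_pdivlMr // mulrC mulr_natr -lnXn; last lra.
rewrite ler_ln ?posrE ?exprn_gt0 ?ltr0n //.
rewrite -natrX ler_nat; apply: trunc_logP => //.
Qed.

Lemma alpha_ge0 (R : realType) n lam l : (0 : R) <= alpha n lam l.
Proof. exact: powR_ge0. Qed.

Lemma alpha_anti (R : realType) n lam m :
  alpha (R:=R) n lam m.+1 <= alpha n lam m.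
Proof.
rewrite /alpha; apply: ler_powR; first by rewrite ler1n.
rewrite lerN2 ler_wpM2r ?invr_ge0 ?ler0n // ler_nat; lia.
Qed.

Lemma alpha0 (R : realType) n lam : alpha (R:=R) n lam 0 = 1.
Proof. by rewrite /alpha mul0r oppr0 powRr0. Qed.

Definition cst (R : realType) n lam : R := powR (n.+1)%:R (1 / (lam.+1)%:R).

Lemma alpha_step (R : realType) n lam l :
  cst R n lam * alpha n lam l.+1 = alpha n lam l.
Proof.
rewrite /cst /alpha -powRD; last by rewrite pnatr_eq0 implybT.
congr powR; rewrite -[(l.+1)%:R]natr1 [(l%:R + 1)]addrC.
have : ((lam.+1)%:R : R) != 0 by rewrite pnatr_eq0.
move=> h; field => //.
by rewrite addrC natr1.
Qed.

Lemma alpha_last (R : realType) n lam :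
  alpha (R:=R) n lam lam * (n.+1)%:R = cst R n lam.
Proof.
rewrite /cst /alpha -{2}(powRr1 (ler0n _ n.+1)) -powRD; last by rewrite pnatr_eq0 implybT.
congr powR; rewrite -[(lam.+1)%:R]natr1.
have : ((lam%:R + 1) : R) != 0 by rewrite natr1 pnatr_eq0.
move=> h; field => //.
Qed.

Lemma foldr_ext (R : realType) (s : seq nat) (c1 c2 : nat -> bool) (g : nat -> R) :
  (forall l, l \in s -> c1 l = c2 l) ->
  foldr (fun l acc => if c1 l then g l else acc) 0 s =
  foldr (fun l acc => if c2 l then g l else acc) 0 s.
Proof.
elim: s => //= a s IH h; rewrite h ?mem_head // IH // => l hl.
by apply: h; rewrite in_cons hl orbT.
Qed.

Lemma agent_ok (R : realType) n lam (vi : 'I_n.+1 -> R) (rk : {perm 'I_n.+1}) :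
  (forall j, 0 <= vi j) -> consistent vi rk ->
  let r := qrun vi (tsf_agent rk lam) in
  ((r.2)%:R : R) <= 1 + lam%:R + lam%:R * (ln (n.+1)%:R / ln 2)
  /\ (forall j, tilde_of_output lam rk r.1 j = tilde_spec lam vi rk j).
Proof.
move=> h0 hc r.
set f := fun p : nat => vi (rk (inord p)).
have hf : forall p q, (p <= q < n.+1)%N -> f q <= f p.
  move=> p q hpq; rewrite /f; apply: hc => /=; rewrite !inordK; lia.
have i0 : inord 0 = ord0 :> 'I_n.+1 by apply: val_inj; rewrite /= inordK.
have f0 : f 0%N = vi (rk ord0) by rewrite /f i0.
have vs0 : 0 <= vi (rk ord0) by [].
have ha : forall m, alpha n lam m.+1 * vi (rk ord0) <= alpha n lam m * vi (rk ord0).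
  by move=> m; apply: ler_wpM2r => //; apply: alpha_anti.
have hpre : forall p, (1 <= p < 1)%N -> alpha n lam 1 * vi (rk ord0) <= f p.
  by move=> p hp; exfalso; lia.
have [hs ht] := @levels_spec R n vi rk lam (vi (rk ord0)) hf ha lam 1 1 (ltac:(lia)) hpre.
set bs := (qrun vi (levels rk lam (vi (rk ord0)) 1 1 lam)).1 in hs ht.
have er : r = ((vi (rk ord0), bs),
   ((qrun vi (levels rk lam (vi (rk ord0)) 1 1 lam)).2 + 0).+1).
  by rewrite /r /tsf_agent /= qrun_bind.
rewrite er; split.
  have hk := @trunc_log_ltn 2 n.+1 isT.
  have hc' := @levels_cnt R n vi rk lam (vi (rk ord0)) _ hk lam 1 1.
  apply: (@le_trans _ _ ((1 + lam * (trunc_log 2 n.+1).+1)%N)%:R).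
    rewrite /= ler_nat; lia.
  rewrite natrD natrM -natr1.
  have := log_bound R n; have := ler0n R lam.
  set X := _ / _; set t := (trunc_log _ _)%:R; set L := lam%:R; nra.
move=> j; rewrite /tilde_of_output /tilde_spec /=.
set p := nat_of_ord ((rk^-1)%g j).
have hpN : (p < n.+1)%N by rewrite /p.
have hj : rk (inord p) = j by rewrite /p inord_val permKV.
have fp : f p = vi j by rewrite /f hj.
case: eqP => hp0.
  by rewrite -hj hp0 i0 eqxx.
have hjne : (j == rk ord0) = false.
  apply/eqP => e; apply: hp0; by rewrite /p e permK.
rewrite hjne; apply: foldr_ext => l; rewrite mem_iota => hl.
rewrite /inQ hjne /=.
case: l hl => [|l'] hl; first by exfalso; lia.
rewrite /= [nth _ bs l']/=.
have e1 := ht l' (ltac:(lia)) p (ltac:(lia)).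
rewrite hj in e1; rewrite ltnNge e1 -leNgt add1n.
case: l' hl e1 => [|l''] hl e1 /=.
  have : vi j <= vi (rk ord0) by rewrite -fp -f0; apply: hf; lia.
  move=> ->; rewrite orbT andbT.
  case: p hp0 {e1 hpN hj fp} => //= -[|p] //.
have e2 := ht l'' (ltac:(lia)) p (ltac:(lia)).
rewrite hj in e2; rewrite e2 add1n orbF andbC.
by [].
Qed.
Lemma foldr_cases (R : realType) (s : seq nat) (c : nat -> bool) (g : nat -> R) :
  let F := foldr (fun l acc => if c l then g l else acc) 0 s in
  (F = 0 /\ forall l, l \in s -> c l = false) \/
  (exists l, [/\ l \in s, c l & F = g l]).
Proof.
elim: s => [|a s IH] /=; first by left.
case: ifP => ha.
  by right; exists a; rewrite mem_head.
case: IH => [[-> h]|[l [hl hc ->]]].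
  left; split=> // l; rewrite in_cons => /orP[/eqP -> //|]; exact: h.
by right; exists l; rewrite in_cons hl orbT.
Qed.

Section Tilde.
Variables (R : realType) (n lam : nat) (vi : 'I_n.+1 -> R) (rk : {perm 'I_n.+1}).
Hypothesis h0 : forall j, 0 <= vi j.
Hypothesis hc : consistent vi rk.

Local Notation vs := (vi (rk ord0)).
Let fc (j : 'I_n.+1) := @foldr_cases R (iota 1 lam) (fun l => inQ lam vi (rk ord0) l j)
   (fun l => alpha n lam l * vi (rk ord0)).

Lemma vi_le_top j : vi j <= vs.
Proof.
rewrite -(permKV rk j); apply: hc => /=; lia.
Qed.

Lemma tilde_top : tilde_spec lam vi rk (rk ord0) = vs.
Proof. by rewrite /tilde_spec eqxx. Qed.

Lemma tilde_ge0 j : 0 <= tilde_spec lam vi rk j.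
Proof.
rewrite /tilde_spec; case: ifP => // _.
case: (fc j) => [[-> _]|[l [_ _ ->]]] //.
by rewrite mulr_ge0 // alpha_ge0.
Qed.

Lemma tilde_le j : tilde_spec lam vi rk j <= vi j.
Proof.
rewrite /tilde_spec; case: ifP => [/eqP -> //|_].
case: (fc j) => [[-> _]|[l [_ hq ->]]] //.
by case/and3P: hq.
Qed.

Lemma cst_ge1 : 1 <= cst R n lam.
Proof.
rewrite /cst -{1}(powRr0 (n.+1)%:R); apply: ler_powR; first by rewrite ler1n.
by rewrite divr_ge0.
Qed.

Lemma vi_le j : vi j <= cst R n lam * tilde_spec lam vi rk j + alpha n lam lam * vs.
Proof.
have hvs : 0 <= vs by [].
have ha : 0 <= alpha n lam lam * vs by rewrite mulr_ge0 // alpha_ge0.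
rewrite /tilde_spec; case: ifP => [/eqP ->|hj].
  have := cst_ge1; nra.
case: (fc j) => [[-> hno]|[l [hl hq ->]]].
  rewrite mulr0 add0r.
  case: lam hno => [|lam'] hno; first by rewrite alpha0 mul1r vi_le_top.
  suff : forall m, (1 <= m <= lam'.+1)%N -> vi j < alpha n lam'.+1 m * vs.
    by move=> H; apply/ltW/H; lia.
  elim=> [|m IH] hm; first by exfalso; lia.
  rewrite ltNge; apply/negP => hle.
  have := hno m.+1; rewrite mem_iota /inQ hj hle /=.
  case: m IH hm hle => [|m] IH hm hle.
    by rewrite vi_le_top orbT => /(_ ltac:(lia)).
  by rewrite IH ?orbT //; [move=> /(_ ltac:(lia)) | lia].
case: l hl hq => [|l] hl hq; first by rewrite mem_iota in hl.
rewrite mulrA alpha_step; apply: ler_wpDr => //.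
case/and3P: hq => _ _ /orP[/ltW //|/andP[/eqP e hle]].
by case: l e hl => // _ _; rewrite alpha0 mul1r.
Qed.
End Tilde.

Theorem theorem2 (R : realType) (n lam : nat)
    (v : 'I_n.+1 -> 'I_n.+1 -> R) (rank : 'I_n.+1 -> {perm 'I_n.+1}) :
  (forall i j, 0 <= v i j) ->
  (forall i, consistent (v i) (rank i)) ->
  (* query complexity, and the queried procedure computes exactly tilde v_i *)
  (forall i : 'I_n.+1,
     let r := qrun (v i) (tsf_agent (rank i) lam) in
     ((r.2)%:R : R) <= 1 + lam%:R + lam%:R * (ln (n.+1)%:R / ln 2)
     /\ (forall j, tilde_of_output lam (rank i) r.1 j
                   = tilde_spec lam (v i) (rank i) j)) /\
  (* distortion: any matching maximizing sum_i tilde v_i(y_i) *)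
  (forall Y : {perm 'I_n.+1},
     (forall Y' : {perm 'I_n.+1},
        \sum_i tilde_spec lam (v i) (rank i) (Y' i)
        <= \sum_i tilde_spec lam (v i) (rank i) (Y i)) ->
     forall Z : {perm 'I_n.+1},
       SW v Z <= 2 * powR (n.+1)%:R (1 / (lam.+1)%:R) * SW v Y).
Proof.
move=> hv hc; split.
  move=> i; exact: (@agent_ok R n lam (v i) (rank i) (hv i) (hc i)).
move=> Y hY Z.
have hSWY : \sum_i tilde_spec lam (v i) (rank i) (Y i) <= SW v Y.
  by rewrite /SW; apply: ler_sum => i _; apply: tilde_le.
have htop : forall i0, v i0 (rank i0 ord0) <= SW v Y.
  move=> i0; apply: le_trans hSWY.
  apply: le_trans (hY (tperm i0 (rank i0 ord0))).
  rewrite (bigD1 i0) //= tpermL tilde_top; apply: ler_wpDr => //.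
  by apply: sumr_ge0 => i _; apply: tilde_ge0.
have hsum : \sum_i v i (rank i ord0) <= (n.+1)%:R * SW v Y.
  have -> : (n.+1)%:R * SW v Y = \sum_(i : 'I_n.+1) SW v Y.
    by rewrite sumr_const card_ord mulr_natl.
  by apply: ler_sum => i _; apply: htop.
have hZ : SW v Z <= cst R n lam * \sum_i tilde_spec lam (v i) (rank i) (Z i)
                   + alpha n lam lam * \sum_i v i (rank i ord0).
  rewrite /SW !mulr_sumr -big_split /=; apply: ler_sum => i _; exact: vi_le.
have hc0 : 0 <= cst R n lam by apply: le_trans (cst_ge1 R n lam); lra.
have ha0 : 0 <= alpha (R:=R) n lam lam := alpha_ge0 _ _ _ _.
have h1 := ler_wpM2l hc0 (le_trans (hY Z) hSWY).
have h2 := ler_wpM2l ha0 hsum.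
rewrite mulrA alpha_last in h2.
apply: le_trans hZ _; rewrite -/(cst R n lam).
move: h1 h2; set T := \sum_i _; set S := \sum_i _; set c := cst R n lam.
set a := alpha n lam lam; set W := SW v Y; nra.
Qed.
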